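(* Let $\Omega$ be a countably infinite set and $G$ a subgroup of $S=\mathrm{Sym}(\Omega)$. Suppose there exist a sequence $(\alpha_i)_{i\in\omega}$ of distinct elements of $\Omega$ and nonempty subsets $D_i\subseteq\Omega^i$ ($i\in\omega$) such that: (i) for each $i$ and each $(\beta_0,\ldots,\beta_i)\in D_{i+1}$, we have $(\beta_0,\ldots,\beta_{i-1})\in D_i$; (ii) for each $i$ and each $(\beta_0,\ldots,\beta_{i-1})\in D_i$, there exist infinitely many $\beta\in\Omega$ with $(\beta_0,\ldots,\beta_{i-1},\beta)\in D_{i+1}$; (iii) whenever $(\beta_i)_{i\in\omega}\in\Omega^\omega$ satisfies $(\beta_0,\ldots,\beta_{i-1})\in D_i$ for every $i$, there exists $g\in G$ with $\beta_i=\alpha_ig$ for all $i$. Then $G\approx S$.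
   Context: $\mathrm{Sym}(\Omega)$ is the group of all permutations of $\Omega$, acting on the right. For subgroups $G_1,G_2\le S$: $G_1\preccurlyeq G_2$ means there is a finite $U\subseteq S$ with $G_1\le\langle G_2\cup U\rangle$, and $G_1\approx G_2$ means $G_1\preccurlyeq G_2$ and $G_2\preccurlyeq G_1$. *)

(* Defs.v *)
(* Permutations of Omega are represented as bijective functions
   Omega -> Omega; the right action alpha^g is written (g alpha), and the
   product g*h (first g, then h) is (fun x => h (g x)). *)
From Stdlib Require Import List.
Import ListNotations.

Definition bijective {T : Type} (f : T -> T) : Prop :=
  exists g : T -> T, (forall x, g (f x) = x) /\ (forall y, f (g y) = y).

Definition countably_infinite (T : Type) : Prop :=
  exists e : nat -> T, (forall m n, e m = e n -> m = n) /\ (forall x, exists n, e n = x).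

Definition Sym (T : Type) : (T -> T) -> Prop := fun f => bijective f.

Definition is_subgroup {T : Type} (G : (T -> T) -> Prop) : Prop :=
  (forall f, G f -> Sym T f) /\
  G (fun x => x) /\
  (forall f g, G f -> G g -> G (fun x => g (f x))) /\
  (forall f, G f -> exists h, G h /\ (forall x, h (f x) = x) /\ (forall y, f (h y) = y)).

Definition generated {T : Type} (A : (T -> T) -> Prop) : (T -> T) -> Prop :=
  fun f => forall H : (T -> T) -> Prop, is_subgroup H -> (forall a, A a -> H a) -> H f.

Definition preccurlyeq {T : Type} (G1 G2 : (T -> T) -> Prop) : Prop :=
  exists U : list (T -> T), (forall u, In u U -> Sym T u) /\
    (forall f, G1 f -> generated (fun a => G2 a \/ In a U) f).

Definition approx {T : Type} (G1 G2 : (T -> T) -> Prop) : Prop :=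
  preccurlyeq G1 G2 /\ preccurlyeq G2 G1.

Definition prefix {T : Type} (beta : nat -> T) (i : nat) : list T := map beta (seq 0 i).

(* Main.v *)
Require Import Defs.
From Stdlib Require Import List Arith Lia ZArith Cantor ClassicalEpsilon FunctionalExtensionality ConstructiveEpsilon.
Import ListNotations.

Definition decP (P : Prop) : {P} + {~ P} := excluded_middle_informative P.

Definition minnat (P : nat -> Prop) : nat :=
  match decP (exists n, P n) with
  | left H => proj1_sig (epsilon_smallest P (fun n => decP (P n)) H)
  | right _ => 0
  end.

Lemma minnat_spec (P : nat -> Prop) : (exists n, P n) -> P (minnat P) /\ forall k, P k -> minnat P <= k.
Proof.
  intro H. unfold minnat. destruct (decP (exists n, P n)) as [H'|H'].
  - destruct (epsilon_smallest P (fun n => decP (P n)) H') as [m [Hm1 Hm2]]. simpl. split; auto.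
  - contradiction.
Qed.

Lemma minnat_P (P : nat -> Prop) : (exists n, P n) -> P (minnat P).
Proof. intro H; apply (minnat_spec P H). Qed.
Lemma minnat_le (P : nat -> Prop) k : P k -> minnat P <= k.
Proof. intro H; apply (minnat_spec P (ex_intro _ k H)); auto. Qed.

Lemma minnat_ext (P Q : nat -> Prop) : (forall n, P n <-> Q n) -> minnat P = minnat Q.
Proof.
  intro E. destruct (decP (exists n, P n)) as [[n Hn]|H].
  - assert (HQ : Q n) by (apply E; auto).
    pose proof (minnat_spec P (ex_intro _ n Hn)) as [A1 A2].
    pose proof (minnat_spec Q (ex_intro _ n HQ)) as [B1 B2].
    apply Nat.le_antisymm; [apply A2; apply E| apply B2; apply E]; auto.
  - unfold minnat. destruct (decP (exists n, P n)); [contradiction|].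
    destruct (decP (exists n, Q n)) as [[m Hm]|]; auto.
    exfalso; apply H; exists m; apply E; auto.
Qed.

Definition perm (f : nat -> nat) : Prop := bijective f.

Lemma inj_surj_perm (f : nat -> nat) :
  (forall x y, f x = f y -> x = y) -> (forall y, exists x, f x = y) -> perm f.
Proof.
  intros Hi Hs. exists (fun y => minnat (fun x => f x = y)). split.
  - intro x. apply Hi. apply (minnat_P (fun z => f z = f x)). eauto.
  - intro y. apply (minnat_P (fun z => f z = y)). auto.
Qed.

Lemma invol_perm (f : nat -> nat) : (forall x, f (f x) = x) -> perm f.
Proof. intro H. exists f; split; auto. Qed.

Lemma perm_inj f : perm f -> forall x y, f x = f y -> x = y.
Proof. intros [g [H1 H2]] x y E. rewrite <- (H1 x), <- (H1 y), E. auto. Qed.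

Section Grp.
Variable K : (nat -> nat) -> Prop.
Hypothesis HK : is_subgroup K.

Lemma K_perm f : K f -> perm f.
Proof. destruct HK as [A _]. apply A. Qed.
Lemma K_id : K (fun x => x).
Proof. destruct HK as [_ [A _]]. exact A. Qed.
Lemma K_comp f g : K f -> K g -> K (fun x => g (f x)).
Proof. destruct HK as [_ [_ [A _]]]. apply A. Qed.
Lemma K_inv f : K f -> exists h, K h /\ (forall x, h (f x) = x) /\ (forall y, f (h y) = y).
Proof. destruct HK as [_ [_ [_ A]]]. apply A. Qed.
Lemma K_ext f g : K f -> (forall x, f x = g x) -> K g.
Proof. intros H E. replace g with f; auto. apply functional_extensionality; auto. Qed.
Lemma K_conj f g : K f -> K g -> (exists fi, K fi /\ (forall x, fi (f x) = x) /\ (forall y, f (fi y) = y)).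
Proof. intros; apply K_inv; auto. Qed.

Lemma K_conj_invol z f : K z -> (forall x, z (z x) = x) -> K (fun x => z (f (z x))) -> K f.
Proof.
  intros Hz Hzz H.
  apply K_ext with (f := fun x => z (z (f (z (z x))))).
  - apply (K_comp (fun x => z (f (z (z x)))) z); [|exact Hz].
    apply (K_comp z (fun y => z (f (z y)))); [exact Hz|exact H].
  - intro x. rewrite !Hzz. auto.
Qed.
End Grp.

(* ---------- every permutation is a product of two involutions ---------- *)
Section Refl.
Variables f g : nat -> nat.
Hypothesis Hgf : forall x, g (f x) = x.
Hypothesis Hfg : forall y, f (g y) = y.

Definition Fz (k : Z) (x : nat) : nat :=
  if Z.leb 0 k then Nat.iter (Z.to_nat k) f x else Nat.iter (Z.to_nat (- k)) g x.

Lemma Fz_0 x : Fz 0 x = x.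
Proof. reflexivity. Qed.

Lemma Fz_succ k x : Fz (k + 1) x = f (Fz k x).
Proof.
  unfold Fz. destruct (Z.leb_spec 0 k) as [H|H].
  - destruct (Z.leb_spec 0 (k+1)); [|lia].
    replace (Z.to_nat (k+1)) with (S (Z.to_nat k)) by lia. reflexivity.
  - destruct (Z.leb_spec 0 (k+1)).
    + assert (k = -1)%Z by lia. subst. simpl. rewrite Hfg. auto.
    + replace (Z.to_nat (- k)) with (S (Z.to_nat (- (k+1)))) by lia. simpl. rewrite Hfg. auto.
Qed.

Lemma Fz_pred k x : Fz (k - 1) x = g (Fz k x).
Proof.
  replace (Fz k x) with (Fz ((k - 1) + 1) x) by (f_equal; lia).
  rewrite Fz_succ, Hgf. auto.
Qed.

Lemma Fz_add k l x : Fz (k + l) x = Fz k (Fz l x).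
Proof.
  revert x. induction k using Z.peano_ind; intro x.
  - simpl. auto.
  - replace (Z.succ k + l)%Z with ((k + l) + 1)%Z by lia. rewrite Fz_succ, IHk.
    replace (Z.succ k) with (k + 1)%Z by lia. rewrite Fz_succ. auto.
  - replace (Z.pred k + l)%Z with ((k + l) - 1)%Z by lia. rewrite Fz_pred, IHk.
    replace (Z.pred k) with (k - 1)%Z by lia. rewrite Fz_pred. auto.
Qed.

Lemma Fz_wd a b c r : Fz a r = Fz b r -> Fz (c - a) r = Fz (c - b) r.
Proof.
  intro E.
  replace (c - a)%Z with ((c - a - b) + b)%Z by lia. rewrite Fz_add, <- E, <- Fz_add.
  f_equal; lia.
Qed.

Definition rep (x : nat) : nat := minnat (fun r => exists k, Fz k r = x).

Lemma rep_spec x : exists k, Fz k (rep x) = x.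
Proof. apply (minnat_P (fun r => exists k, Fz k r = x)). exists x, 0%Z. auto. Qed.

Lemma rep_eq x y : (exists k, Fz k (rep x) = y) -> rep y = rep x.
Proof.
  intros [k Hk]. destruct (rep_spec x) as [k0 Hk0].
  unfold rep. apply minnat_ext. intro r. split.
  - intros [m Hm]. exists (k0 - k + m)%Z.
    rewrite Fz_add, Hm, <- Hk, <- Fz_add.
    replace (k0 - k + k)%Z with k0 by lia. exact Hk0.
  - intros [m Hm]. exists (k - k0 + m)%Z.
    rewrite Fz_add, Hm, <- Hk0, <- Fz_add.
    replace (k - k0 + k0)%Z with k by lia. exact Hk.
Qed.

Definition kx (x : nat) : Z := proj1_sig (@ClassicalEpsilon.constructive_indefinite_description _ _ (rep_spec x)).
Lemma kx_spec x : Fz (kx x) (rep x) = x.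
Proof. unfold kx. destruct (@ClassicalEpsilon.constructive_indefinite_description _ _ (rep_spec x)). auto. Qed.

Definition iota1 x := Fz (- kx x) (rep x).
Definition iota2 x := Fz (1 - kx x) (rep x).

Lemma iota1_rep x : rep (iota1 x) = rep x.
Proof. apply rep_eq. exists (- kx x)%Z. auto. Qed.
Lemma iota2_rep x : rep (iota2 x) = rep x.
Proof. apply rep_eq. exists (1 - kx x)%Z. auto. Qed.

Lemma iota1_invol x : iota1 (iota1 x) = x.
Proof.
  unfold iota1 at 1. rewrite iota1_rep.
  pose proof (kx_spec (iota1 x)) as E. rewrite iota1_rep in E. unfold iota1 in E at 2.
  pose proof (Fz_wd _ _ 0 _ E) as E2.
  replace (- kx (iota1 x))%Z with (0 - kx (iota1 x))%Z by lia. rewrite E2.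
  replace (0 - - kx x)%Z with (kx x) by lia. apply kx_spec.
Qed.

Lemma iota2_invol x : iota2 (iota2 x) = x.
Proof.
  unfold iota2 at 1. rewrite iota2_rep.
  pose proof (kx_spec (iota2 x)) as E. rewrite iota2_rep in E. unfold iota2 in E at 2.
  pose proof (Fz_wd _ _ 1 _ E) as E2. rewrite E2.
  replace (1 - (1 - kx x))%Z with (kx x) by lia. apply kx_spec.
Qed.

Lemma iota21 x : iota2 (iota1 x) = f x.
Proof.
  unfold iota2. rewrite iota1_rep.
  pose proof (kx_spec (iota1 x)) as E. rewrite iota1_rep in E. unfold iota1 in E at 2.
  pose proof (Fz_wd _ _ 1 _ E) as E2. rewrite E2.
  replace (1 - - kx x)%Z with (kx x + 1)%Z by lia. rewrite Fz_succ, kx_spec. auto.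
Qed.
End Refl.

Lemma perm_from_invols (K : (nat -> nat) -> Prop) : is_subgroup K ->
  (forall Q, (forall x, Q (Q x) = x) -> K Q) -> forall f, perm f -> K f.
Proof.
  intros HK HQ f [g [H1 H2]].
  apply (K_ext K) with (f := fun x => iota2 f g (iota1 f g x)).
  - apply K_comp; auto; apply HQ; [apply iota1_invol|apply iota2_invol]; auto.
  - intro x. apply iota21; auto.
Qed.

Definition inA (a : nat -> nat) (y : nat) : Prop := exists n, a n = y.
Definition ainv (a : nat -> nat) (y : nat) : nat := minnat (fun n => a n = y).

Lemma ainv_a a (Ha : forall m n, a m = a n -> m = n) i : ainv a (a i) = i.
Proof. apply Ha. apply (minnat_P (fun n => a n = a i)). eauto. Qed.
Lemma a_ainv a y : inA a y -> a (ainv a y) = y.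
Proof. intros H. apply (minnat_P (fun n => a n = y)). exact H. Qed.

Definition lift (a : nat -> nat) (s : nat -> nat) (y : nat) : nat :=
  if decP (inA a y) then a (s (ainv a y)) else y.

Lemma lift_a a (Ha : forall m n, a m = a n -> m = n) s i : lift a s (a i) = a (s i).
Proof.
  unfold lift. destruct (decP (inA a (a i))) as [_|N]; [rewrite ainv_a; auto| exfalso; apply N; exists i; auto].
Qed.
Lemma lift_out a s y : ~ inA a y -> lift a s y = y.
Proof. intros N. unfold lift. destruct (decP (inA a y)); [contradiction|auto]. Qed.

Lemma lift_perm a (Ha : forall m n, a m = a n -> m = n) s : perm s -> perm (lift a s).
Proof.
  intros [t [H1 H2]]. exists (lift a t). split; intro x.
  - destruct (decP (inA a x)) as [[n <-]|N].
    + rewrite !lift_a by auto. rewrite H1; auto.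
    + rewrite (lift_out a s x N), (lift_out a t x N). auto.
  - destruct (decP (inA a x)) as [[n <-]|N].
    + rewrite !lift_a by auto. rewrite H2; auto.
    + rewrite (lift_out a t x N), (lift_out a s x N). auto.
Qed.

Definition zz (a : nat -> nat) (p : nat) (y : nat) : nat :=
  if decP (inA a y) then
    (if decP (Nat.modulo (ainv a y) 2 = p /\ ~ inA a (Nat.div (ainv a y) 2))
     then Nat.div (ainv a y) 2 else y)
  else a (2 * y + p).

Lemma zz_out a (Ha : forall m n, a m = a n -> m = n) p (Hp : p < 2) y : ~ inA a y -> zz a p y = a (2*y+p).
Proof. intros N. unfold zz. destruct (decP (inA a y)); [contradiction|auto]. Qed.

Lemma zz_invol a (Ha : forall m n, a m = a n -> m = n) p (Hp : p < 2) y : zz a p (zz a p y) = y.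
Proof.
  unfold zz at 2. destruct (decP (inA a y)) as [[m <-]|N].
  - rewrite ainv_a; auto.
    destruct (decP (Nat.modulo m 2 = p /\ ~ inA a (Nat.div m 2))) as [[E1 E2]|E].
    + unfold zz. destruct (decP (inA a (m/2))); [contradiction|].
      f_equal. pose proof (Nat.div_mod_eq m 2). lia.
    + unfold zz. destruct (decP (inA a (a m))) as [_|N]; [|exfalso; apply N; exists m; auto].
      rewrite ainv_a; auto.
      destruct (decP (Nat.modulo m 2 = p /\ ~ inA a (Nat.div m 2))); [contradiction|auto].
  - unfold zz. destruct (decP (inA a (a (2*y+p)))) as [_|N']; [|exfalso; apply N'; eexists; eauto].
    rewrite ainv_a; auto.
    replace (Nat.modulo (2*y+p) 2) with p.
    2:{ rewrite Nat.add_comm, Nat.mul_comm, Nat.Div0.mod_add. rewrite Nat.mod_small; auto. }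
    replace (Nat.div (2*y+p) 2) with y.
    2:{ rewrite Nat.add_comm, Nat.mul_comm, Nat.div_add by lia. rewrite Nat.div_small; auto. }
    destruct (decP (p = p /\ ~ inA a y)) as [_|E]; auto. exfalso; apply E; auto.
Qed.

Section Red.
Variable K : (nat -> nat) -> Prop.
Hypothesis HK : is_subgroup K.
Variable a : nat -> nat.
Hypothesis Ha : forall m n, a m = a n -> m = n.
Hypothesis Hz0 : K (zz a 0).
Hypothesis Hz1 : K (zz a 1).
Hypothesis Hinv : forall s, (forall i, s (s i) = i) -> K (lift a s).

Lemma supported_invol Y : (forall x, Y (Y x) = x) -> (forall y, ~ inA a y -> Y y = y) -> K Y.
Proof.
  intros HY Hs.
  assert (HA : forall i, inA a (Y (a i))).
  { intro i. destruct (decP (inA a (Y (a i)))) as [H|N]; auto.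
    exfalso. apply N. rewrite <- (Hs _ N), HY. exists i; auto. }
  set (s := fun i => ainv a (Y (a i))).
  assert (Es : forall i, a (s i) = Y (a i)) by (intro i; apply a_ainv; auto).
  apply (K_ext K) with (f := lift a s).
  - apply Hinv. intro i. apply Ha. rewrite !Es, HY. auto.
  - intro x. destruct (decP (inA a x)) as [[n <-]|N].
    + rewrite lift_a; auto.
    + rewrite lift_out, Hs; auto.
Qed.

Definition Part (T : nat -> nat -> Prop) (Q : nat -> nat) (x : nat) : nat :=
  if decP (T x (Q x)) then Q x else x.

Lemma Part_invol T Q : (forall x y, T x y -> T y x) -> (forall x, Q (Q x) = x) ->
  forall x, Part T Q (Part T Q x) = x.
Proof.
  intros Ts HQ x. unfold Part at 2. destruct (decP (T x (Q x))) as [H|H].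
  - unfold Part. rewrite HQ. destruct (decP (T (Q x) x)) as [_|N]; auto. exfalso; apply N; auto.
  - unfold Part. destruct (decP (T x (Q x))); [contradiction|auto].
Qed.

Lemma Part_yes T Q x : T x (Q x) -> Part T Q x = Q x.
Proof. intro H. unfold Part. destruct (decP (T x (Q x))); [auto|contradiction]. Qed.
Lemma Part_no T Q x : ~ T x (Q x) -> Part T Q x = x.
Proof. intro H. unfold Part. destruct (decP (T x (Q x))); [contradiction|auto]. Qed.

Lemma Part_comp4 (U1 U2 U3 U4 : nat -> nat -> Prop) Q x : (forall x, Q (Q x) = x) ->
  (forall x y, U1 x y -> U1 y x) -> (forall x y, U2 x y -> U2 y x) ->
  (forall x y, U3 x y -> U3 y x) -> (forall x y, U4 x y -> U4 y x) ->
  (forall x, U1 x (Q x) \/ U2 x (Q x) \/ U3 x (Q x) \/ U4 x (Q x)) ->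
  (forall x y, U1 x y -> U2 x y -> False) -> (forall x y, U1 x y -> U3 x y -> False) ->
  (forall x y, U1 x y -> U4 x y -> False) -> (forall x y, U2 x y -> U3 x y -> False) ->
  (forall x y, U2 x y -> U4 x y -> False) -> (forall x y, U3 x y -> U4 x y -> False) ->
  Part U1 Q (Part U2 Q (Part U3 Q (Part U4 Q x))) = Q x.
Proof.
  intros HQ S1 S2 S3 S4 Cov D12 D13 D14 D23 D24 D34.
  destruct (Cov x) as [H|[H|[H|H]]].
  - rewrite (Part_no U4), (Part_no U3), (Part_no U2), (Part_yes U1); eauto.
  - rewrite (Part_no U4), (Part_no U3), (Part_yes U2), (Part_no U1); rewrite ?HQ; eauto.
  - rewrite (Part_no U4), (Part_yes U3), (Part_no U2), (Part_no U1); rewrite ?HQ; eauto.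
  - rewrite (Part_yes U4), (Part_no U3), (Part_no U2), (Part_no U1); rewrite ?HQ; eauto.
Qed.

Definition Aev y := inA a y /\ Nat.modulo (ainv a y) 2 = 0.
Definition Aod y := inA a y /\ Nat.modulo (ainv a y) 2 = 1.
Definition T1 x y := inA a x /\ inA a y.
Definition T2 x y := ~ inA a x /\ ~ inA a y.
Definition T3 x y := (Aod x /\ ~ inA a y) \/ (~ inA a x /\ Aod y).
Definition T4 x y := (Aev x /\ ~ inA a y) \/ (~ inA a x /\ Aev y).

Lemma all_invols Q : (forall x, Q (Q x) = x) -> K Q.
Proof.
  intro HQ.
  assert (Hmod : forall y, inA a y -> Aev y \/ Aod y).
  { intros y Hy. unfold Aev, Aod. pose proof (Nat.mod_upper_bound (ainv a y) 2 ltac:(lia)).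
    destruct (Nat.modulo (ainv a y) 2) as [|[|k]]; [left|right|lia]; auto. }
  assert (Hne : forall y, Aev y -> Aod y -> False) by (unfold Aev, Aod; intros y [_ E1] [_ E2]; lia).
  assert (HP1 : K (Part T1 Q)).
  { apply supported_invol.
    - apply Part_invol; auto. unfold T1; tauto.
    - intros y N. unfold Part. destruct (decP (T1 y (Q y))) as [[H _]|]; [contradiction|auto]. }
  assert (HP2 : K (Part T2 Q)).
  { apply (K_conj_invol K HK (zz a 0)); auto. apply zz_invol; auto.
    apply supported_invol.
    - intro x. rewrite (zz_invol a Ha 0) by lia. rewrite Part_invol; auto.
      apply zz_invol; auto. unfold T2; tauto.
    - intros y N. rewrite (zz_out a Ha 0 ltac:(lia) y N). unfold Part.
      destruct (decP (T2 (a (2*y+0)) (Q (a (2*y+0))))) as [[H _]|].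
      + exfalso; apply H; eexists; eauto.
      + rewrite <- (zz_out a Ha 0 ltac:(lia) y N). apply zz_invol; auto. }
  assert (HP3 : K (Part T3 Q)).
  { apply (K_conj_invol K HK (zz a 0)); auto. apply zz_invol; auto.
    apply supported_invol.
    - intro x. rewrite (zz_invol a Ha 0) by lia. rewrite Part_invol; auto.
      apply zz_invol; auto. unfold T3; tauto.
    - intros y N. rewrite (zz_out a Ha 0 ltac:(lia) y N). unfold Part.
      destruct (decP (T3 (a (2*y+0)) (Q (a (2*y+0))))) as [H|].
      + exfalso. destruct H as [[[_ E] _]|[H _]].
        * rewrite ainv_a in E; auto. rewrite Nat.add_0_r, Nat.mul_comm, Nat.Div0.mod_mul in E. lia.
        * apply H; eexists; eauto.
      + rewrite <- (zz_out a Ha 0 ltac:(lia) y N). apply zz_invol; auto. }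
  assert (HP4 : K (Part T4 Q)).
  { apply (K_conj_invol K HK (zz a 1)); auto. apply zz_invol; auto.
    apply supported_invol.
    - intro x. rewrite (zz_invol a Ha 1) by lia. rewrite Part_invol; auto.
      apply zz_invol; auto. unfold T4; tauto.
    - intros y N. rewrite (zz_out a Ha 1 ltac:(lia) y N). unfold Part.
      destruct (decP (T4 (a (2*y+1)) (Q (a (2*y+1))))) as [H|].
      + exfalso. destruct H as [[[_ E] _]|[H _]].
        * rewrite ainv_a in E; auto. rewrite Nat.add_comm, Nat.mul_comm, Nat.Div0.mod_add in E.
          simpl in E. lia.
        * apply H; eexists; eauto.
      + rewrite <- (zz_out a Ha 1 ltac:(lia) y N). apply zz_invol; auto. }
  assert (Hev : forall y, Aev y -> inA a y) by (intros y [H _]; auto).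
  assert (Hod : forall y, Aod y -> inA a y) by (intros y [H _]; auto).
  apply (K_ext K) with (f := fun x => Part T1 Q (Part T2 Q (Part T3 Q (Part T4 Q x)))).
  - repeat (apply K_comp; auto).
  - intro x. apply Part_comp4; auto; unfold T1, T2, T3, T4.
    + tauto. + tauto. + tauto. + tauto.
    + intro y. destruct (decP (inA a y)) as [Hx|Hx]; destruct (decP (inA a (Q y))) as [Hy|Hy].
      * tauto.
      * destruct (Hmod y Hx); tauto.
      * destruct (Hmod (Q y) Hy); tauto.
      * tauto.
    + intros u v; intuition eauto.
    + intros u v; intuition eauto.
    + intros u v; intuition eauto.
    + intros u v; intuition eauto.
    + intros u v; intuition eauto.
    + intros u v; intuition eauto.
Qed.
End Red.

Lemma pigeon (f : nat -> nat) n :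
  (forall x, x < n -> f x < n) -> (forall x y, x < n -> y < n -> f x = f y -> x = y) ->
  forall y, y < n -> exists x, x < n /\ f x = y.
Proof.
  intros Hr Hi y Hy.
  assert (ND : NoDup (map f (seq 0 n))).
  { apply NoDup_nth with (d := 0). intros i j Hi' Hj' E.
    rewrite length_map, length_seq in Hi', Hj'.
    rewrite !nth_indep with (d := 0) (d' := f 0) in E by (rewrite length_map, length_seq; auto).
    rewrite !map_nth, !seq_nth in E by auto. simpl in E. apply Hi; auto. }
  assert (Inc : incl (map f (seq 0 n)) (seq 0 n)).
  { intros z Hz. apply in_map_iff in Hz. destruct Hz as [x [<- Hx]]. apply in_seq in Hx.
    apply in_seq. split; [lia|]. simpl. apply Hr. lia. }
  assert (Len : length (seq 0 n) <= length (map f (seq 0 n))) by (rewrite length_map; auto).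
  pose proof (NoDup_length_incl ND Len Inc) as Inc2.
  assert (In y (seq 0 n)) by (apply in_seq; lia).
  apply Inc2 in H. apply in_map_iff in H. destruct H as [x [E Hx]]. apply in_seq in Hx.
  exists x; split; [lia|auto].
Qed.

Lemma nth_map_seq0 (f : nat -> nat) n x d : x < n -> nth x (map f (seq 0 n)) d = f x.
Proof.
  intro H. rewrite nth_indep with (d' := f 0) by (rewrite length_map, length_seq; auto).
  rewrite map_nth, seq_nth; auto.
Qed.

Fixpoint codeL (l : list nat) : nat :=
  match l with [] => 0 | x :: l' => S (Cantor.to_nat (x, codeL l')) end.

Lemma codeL_inj l l' : codeL l = codeL l' -> l = l'.
Proof.
  revert l'. induction l as [|x l IH]; intros [|y l'] E; cbn [codeL] in E; try discriminate; auto.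
  apply Nat.succ_inj in E. apply (f_equal Cantor.of_nat) in E. rewrite !Cantor.cancel_of_to in E.
  injection E as E1 E2. subst. f_equal. auto.
Qed.

Lemma codeL_tl x l : codeL l < codeL (x :: l).
Proof. simpl. pose proof (Cantor.to_nat_non_decreasing x (codeL l)). lia. Qed.

Definition decL (n : nat) : list nat :=
  match decP (exists l, codeL l = n) with
  | left H => proj1_sig (@ClassicalEpsilon.constructive_indefinite_description _ _ H)
  | right _ => []
  end.

Lemma decL_code l : decL (codeL l) = l.
Proof.
  unfold decL. destruct (decP (exists l0, codeL l0 = codeL l)) as [H|H].
  - destruct (ClassicalEpsilon.constructive_indefinite_description _ H) as [l' E]. simpl. apply codeL_inj; auto.
  - exfalso; apply H; eauto.
Qed.

(* ---------- the universal permutation rho ---------- *)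
Definition Lr (r : nat) : list nat := decL (fst (Cantor.of_nat r)).

Lemma Lr_often l N : exists r, N <= r /\ Lr r = l.
Proof.
  exists (Cantor.to_nat (codeL l, N)). split.
  - pose proof (Cantor.to_nat_non_decreasing (codeL l) N). lia.
  - unfold Lr. rewrite Cantor.cancel_of_to. simpl. apply decL_code.
Qed.

Definition valid (l : list nat) : Prop := NoDup l /\ forall y, In y l -> y < length l.
Definition pat (r x : nat) : nat := if decP (valid (Lr r)) then nth x (Lr r) 0 else x.
Definition sz (r : nat) : nat := length (Lr r).
Fixpoint st (r : nat) : nat := match r with 0 => 0 | S r' => st r' + sz r' end.

Lemma st_mono r r' : r <= r' -> st r <= st r'.
Proof. induction 1; simpl; lia. Qed.

Lemma st_unbounded N : exists r, N <= st r.
Proof.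
  induction N as [|N [r Hr]]; [exists 0; lia|].
  destruct (Lr_often [0] r) as [r' [H1 H2]]. exists (S r'). simpl.
  pose proof (st_mono _ _ H1). unfold sz. rewrite H2. simpl. lia.
Qed.

Definition reg (y : nat) : nat := minnat (fun r => y < st (S r)).

Lemma reg_ex y : exists r, y < st (S r).
Proof. destruct (st_unbounded (S y)) as [r Hr]. exists r. pose proof (st_mono r (S r)). lia. Qed.

Lemma reg_spec y : st (reg y) <= y < st (S (reg y)).
Proof.
  pose proof (minnat_spec _ (reg_ex y)) as [H1 H2]. fold (reg y) in H1, H2. split; auto.
  destruct (reg y) as [|r] eqn:E; [simpl; lia|].
  destruct (Nat.lt_ge_cases y (st (S r))) as [H|H]; auto.
  apply H2 in H. lia.
Qed.

Lemma reg_unique y r : st r <= y < st (S r) -> reg y = r.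
Proof.
  intros [H1 H2]. pose proof (minnat_le (fun r => y < st (S r)) r H2) as Hle. fold (reg y) in Hle.
  pose proof (reg_spec y) as RS.
  destruct (Nat.lt_ge_cases (reg y) r) as [H|H]; [|lia].
  pose proof (st_mono (S (reg y)) r H). lia.
Qed.

Lemma valid_lt l x : valid l -> x < length l -> nth x l 0 < length l.
Proof. intros [_ H] Hx. apply H. apply nth_In; auto. Qed.

Lemma pat_lt r x : x < sz r -> pat r x < sz r.
Proof. unfold pat, sz. destruct (decP (valid (Lr r))); auto. intros; apply valid_lt; auto. Qed.

Lemma pat_inj r x y : x < sz r -> y < sz r -> pat r x = pat r y -> x = y.
Proof.
  unfold pat, sz. destruct (decP (valid (Lr r))) as [[ND _]|]; auto.
  intros. eapply NoDup_nth; eauto.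
Qed.

Lemma pat_surj r y : y < sz r -> exists x, x < sz r /\ pat r x = y.
Proof. intros. apply pigeon; auto. apply pat_lt. intros; eapply pat_inj; eauto. Qed.

Definition rho (y : nat) : nat := st (reg y) + pat (reg y) (y - st (reg y)).

Lemma rho_st r x : x < sz r -> rho (st r + x) = st r + pat r x.
Proof.
  intro H. unfold rho. rewrite (reg_unique (st r + x) r) by (simpl; lia).
  f_equal. f_equal. lia.
Qed.

Lemma rho_perm : perm rho.
Proof.
  apply inj_surj_perm.
  - intros y y' E.
    pose proof (reg_spec y) as Ry. pose proof (reg_spec y') as Ry'. simpl in Ry, Ry'.
    assert (Ly : y - st (reg y) < sz (reg y)) by lia.
    assert (Ly' : y' - st (reg y') < sz (reg y')) by lia.
    pose proof (pat_lt _ _ Ly). pose proof (pat_lt _ _ Ly').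
    assert (E1 : reg (rho y) = reg y) by (apply reg_unique; unfold rho; simpl; lia).
    assert (E2 : reg (rho y') = reg y') by (apply reg_unique; unfold rho; simpl; lia).
    assert (Er : reg y = reg y') by congruence.
    revert E Ly Ly' Ry Ry'. unfold rho. rewrite <- Er. set (r := reg y). intros E Ly Ly' Ry Ry'.
    assert (pat r (y - st r) = pat r (y' - st r)) as E3 by lia.
    apply pat_inj in E3; auto. lia.
  - intro y. pose proof (reg_spec y) as Ry. simpl in Ry.
    destruct (pat_surj (reg y) (y - st (reg y))) as [x [Hx E]]; [lia|].
    exists (st (reg y) + x). rewrite rho_st by auto. rewrite E. lia.
Qed.

Definition LF (p : nat -> nat) : Prop := forall n, exists m, n <= m /\ forall x, x < m -> p x < m.

Section Univ.
Variable p : nat -> nat.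
Hypothesis Hp : perm p.
Hypothesis HLF : LF p.

Fixpoint cut (q : nat) : nat :=
  match q with
  | 0 => 0
  | S q' => minnat (fun m => cut q' < m /\ forall x, x < m -> p x < m)
  end.

Lemma cut_spec q : cut q < cut (S q) /\ forall x, x < cut (S q) -> p x < cut (S q).
Proof.
  simpl. apply (minnat_P (fun m => cut q < m /\ forall x, x < m -> p x < m)).
  destruct (HLF (S (cut q))) as [m [H1 H2]]. exists m; split; auto; lia.
Qed.

Lemma cut_pres q x : x < cut q -> p x < cut q.
Proof. destruct q; [simpl; lia|]. apply cut_spec. Qed.

Lemma cut_mono q q' : q <= q' -> cut q <= cut q'.
Proof. induction 1; auto. pose proof (cut_spec m). lia. Qed.

Lemma cut_ge q : q <= cut q.
Proof. induction q; simpl; [lia|]. pose proof (cut_spec q). simpl in H. lia. Qed.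

Lemma p_inj : forall x y, p x = p y -> x = y.
Proof. apply perm_inj; auto. Qed.

Lemma cut_block q x : cut q <= x < cut (S q) -> cut q <= p x < cut (S q).
Proof.
  intros [H1 H2]. split; [|apply cut_spec; auto].
  destruct (Nat.lt_ge_cases (p x) (cut q)) as [H|H]; auto.
  destruct (pigeon p (cut q) (cut_pres q) (fun u v _ _ => p_inj u v) (p x) H) as [u [Hu E]].
  apply p_inj in E. lia.
Qed.

Definition blk (i : nat) : nat := minnat (fun q => i < cut (S q)).
Lemma blk_ex i : exists q, i < cut (S q).
Proof. exists i. pose proof (cut_ge (S i)). lia. Qed.
Lemma blk_spec i : cut (blk i) <= i < cut (S (blk i)).
Proof.
  pose proof (minnat_spec _ (blk_ex i)) as [H1 H2]. fold (blk i) in H1, H2. split; auto.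
  destruct (blk i) as [|q] eqn:E; [simpl; lia|].
  destruct (Nat.lt_ge_cases i (cut (S q))) as [H|H]; auto. apply H2 in H. lia.
Qed.
Lemma blk_unique i q : cut q <= i < cut (S q) -> blk i = q.
Proof.
  intros [H1 H2]. pose proof (minnat_le (fun q => i < cut (S q)) q H2) as Hle. fold (blk i) in Hle.
  pose proof (blk_spec i) as BS.
  destruct (Nat.lt_ge_cases (blk i) q) as [H|H]; [|lia].
  pose proof (cut_mono (S (blk i)) q H). lia.
Qed.

Definition lq (q : nat) : list nat := map (fun x => p (cut q + x) - cut q) (seq 0 (cut (S q) - cut q)).

Lemma lq_len q : length (lq q) = cut (S q) - cut q.
Proof. unfold lq. rewrite length_map, length_seq. auto. Qed.

Lemma lq_nth q x : x < cut (S q) - cut q -> nth x (lq q) 0 = p (cut q + x) - cut q.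
Proof.
  intro H. unfold lq. rewrite nth_map_seq0; auto.
Qed.

Lemma lq_valid q : valid (lq q).
Proof.
  split.
  - apply NoDup_nth with (d := 0). rewrite lq_len. intros i j Hi Hj E.
    rewrite !lq_nth in E by auto.
    pose proof (cut_block q (cut q + i) ltac:(lia)). pose proof (cut_block q (cut q + j) ltac:(lia)).
    assert (p (cut q + i) = p (cut q + j)) by lia. apply p_inj in H1. lia.
  - intros y Hy. rewrite lq_len. apply In_nth with (d := 0) in Hy. destruct Hy as [x [Hx <-]].
    rewrite lq_len in Hx. rewrite lq_nth by auto.
    pose proof (cut_block q (cut q + x) ltac:(lia)). lia.
Qed.

Fixpoint rq (q : nat) : nat :=
  match q with
  | 0 => minnat (fun r => Lr r = lq 0)
  | S q' => minnat (fun r => Lr r = lq (S q') /\ st (S (rq q')) <= st r)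
  end.

Lemma rq_spec q : Lr (rq q) = lq q /\ (forall q', q = S q' -> st (S (rq q')) <= st (rq q)).
Proof.
  destruct q as [|q'].
  - split; [|discriminate]. simpl. apply (minnat_P (fun r => Lr r = lq 0)).
    destruct (Lr_often (lq 0) 0) as [r [_ H]]; eauto.
  - assert (H : exists r, Lr r = lq (S q') /\ st (S (rq q')) <= st r).
    { destruct (Lr_often (lq (S q')) (S (rq q'))) as [r [H1 H2]]. exists r; split; auto.
      apply st_mono; auto. }
    pose proof (minnat_P _ H) as [H1 H2]. simpl. split; auto. intros q'' E. injection E as <-. auto.
Qed.

Lemma rq_sz q : sz (rq q) = cut (S q) - cut q.
Proof. unfold sz. rewrite (proj1 (rq_spec q)). apply lq_len. Qed.

Lemma rq_pat q x : x < cut (S q) - cut q -> pat (rq q) x = p (cut q + x) - cut q.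
Proof.
  intro H. unfold pat. rewrite (proj1 (rq_spec q)).
  destruct (decP (valid (lq q))) as [_|N]; [apply lq_nth; auto|exfalso; apply N, lq_valid].
Qed.

Definition j1 (i : nat) : nat := st (rq (blk i)) + (i - cut (blk i)).

Lemma j1_rho i : rho (j1 i) = j1 (p i).
Proof.
  pose proof (blk_spec i) as B. set (q := blk i) in *.
  unfold j1. fold q. rewrite rho_st by (rewrite rq_sz; lia).
  rewrite rq_pat by lia.
  pose proof (cut_block q i B) as B2.
  rewrite (blk_unique (p i) q B2).
  replace (cut q + (i - cut q)) with i by lia. auto.
Qed.

Lemma j1_incr i : j1 i < j1 (S i).
Proof.
  pose proof (blk_spec i) as B. unfold j1.
  destruct (Nat.lt_ge_cases (S i) (cut (S (blk i)))) as [H|H].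
  - rewrite (blk_unique (S i) (blk i)) by lia. lia.
  - assert (E : S i = cut (S (blk i))) by lia.
    pose proof (cut_spec (S (blk i))) as C.
    rewrite (blk_unique (S i) (S (blk i))) by lia.
    pose proof (proj2 (rq_spec (S (blk i))) (blk i) eq_refl) as R. cbn [st] in R.
    rewrite rq_sz in R. lia.
Qed.
End Univ.

Lemma rho_universal p : perm p -> LF p ->
  exists j, (forall i, j i < j (S i)) /\ forall i, rho (j i) = j (p i).
Proof. intros Hp HL. exists (j1 p). split; [apply j1_incr|apply j1_rho]; auto. Qed.

Lemma fresh_nat (l : list nat) : exists y, ~ In y l.
Proof.
  exists (S (fold_right max 0 l)). intro H.
  assert (forall z, In z l -> z <= fold_right max 0 l).
  { clear H. induction l as [|x l IH]; simpl; [tauto|]. intros z [<-|Hz]; [lia|]. apply IH in Hz. lia. }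
  apply H0 in H. lia.
Qed.

Lemma NoDup_map_inj {A B} (f : A -> B) l x y : NoDup (map f l) -> In x l -> In y l -> f x = f y -> x = y.
Proof.
  induction l as [|z l IH]; simpl; [tauto|]. intros ND Hx Hy E. inversion ND; subst.
  destruct Hx as [<-|Hx]; destruct Hy as [<-|Hy]; auto.
  - exfalso. apply H1. rewrite E. apply in_map; auto.
  - exfalso. apply H1. rewrite <- E. apply in_map; auto.
Qed.

Lemma fill_seq (l : list nat) e : NoDup l -> (forall y, In y l -> y < e) -> length l < e ->
  exists y, y < e /\ ~ In y l.
Proof.
  intros ND Hl Hlen. destruct (decP (exists y, y < e /\ ~ In y l)) as [H|H]; auto.
  exfalso. assert (incl (seq 0 e) l).
  { intros y Hy. apply in_seq in Hy. destruct (decP (In y l)) as [|N]; auto.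
    exfalso; apply H; exists y; split; [lia|auto]. }
  pose proof (NoDup_incl_length (seq_NoDup e 0) H0). rewrite length_seq in H1. lia.
Qed.

Section Pairing.
Variable s : nat -> nat.
Hypothesis Hs : forall x, s (s x) = x.
Hypothesis Hfp : forall x, s x <> x.
Hypothesis HLF : LF s.

Fixpoint used (i : nat) : list nat :=
  match i with
  | 0 => []
  | S i' => used i' ++ [minnat (fun y => ~ In y (used i')); s (minnat (fun y => ~ In y (used i')))]
  end.

Definition nx (i : nat) : nat := minnat (fun y => ~ In y (used i)).

Lemma nx_spec i : ~ In (nx i) (used i) /\ forall y, ~ In y (used i) -> nx i <= y.
Proof. apply (minnat_spec (fun y => ~ In y (used i))). apply fresh_nat. Qed.

Lemma used_S i : used (S i) = used i ++ [nx i; s (nx i)].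
Proof. reflexivity. Qed.

Lemma used_prop i : NoDup (used i) /\ (forall y, In y (used i) -> In (s y) (used i)) /\ length (used i) = 2 * i.
Proof.
  induction i as [|i [ND [Cl Len]]]; [split; [constructor|split; [simpl; tauto|reflexivity]]|].
  rewrite used_S. pose proof (nx_spec i) as [N1 _].
  assert (N2 : ~ In (s (nx i)) (used i)) by (intro H; apply Cl in H; rewrite Hs in H; auto).
  repeat split.
  - apply NoDup_app; auto.
    + constructor; [simpl; intros [H|[]]; apply (Hfp (nx i)); auto|constructor; [simpl; tauto|constructor]].
    + intros y H1 H2. simpl in H2. destruct H2 as [<-|[<-|[]]]; auto.
  - intros y H. apply in_app_or in H. apply in_or_app. destruct H as [H|[<-|[<-|[]]]].
    + left; auto.
    + right; simpl; auto.
    + right; simpl; rewrite Hs; auto.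
  - rewrite length_app, Len. simpl. lia.
Qed.

Lemma used_mono i i' : i <= i' -> incl (used i) (used i').
Proof. induction 1; [apply incl_refl|]. rewrite used_S. intros y Hy. apply in_or_app; left; auto. Qed.

Definition ppi (n : nat) : nat := if Nat.even n then nx (Nat.div2 n) else s (nx (Nat.div2 n)).

Lemma ppi_even i : ppi (2 * i) = nx i.
Proof. unfold ppi. rewrite Nat.even_mul, Nat.div2_double. reflexivity. Qed.
Lemma ppi_odd i : ppi (2 * i + 1) = s (nx i).
Proof.
  unfold ppi. replace (Nat.even (2*i+1)) with false by (rewrite Nat.even_add, Nat.even_mul; auto).
  replace (Nat.div2 (2*i+1)) with i; auto.
  replace (2*i+1) with (S (2*i)) by lia. rewrite Nat.div2_succ_double. auto.
Qed.

Lemma used_map i : used i = map ppi (seq 0 (2 * i)).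
Proof.
  induction i as [|i IH]; auto. rewrite used_S, IH.
  replace (2 * S i) with (2 * i + 2) by lia. rewrite seq_app, map_app. f_equal.
  replace (seq (0 + 2 * i) 2) with [2*i; 2*i+1] by (simpl; repeat f_equal; lia).
  cbn [map]. rewrite ppi_even, ppi_odd. auto.
Qed.

Lemma ppi_pair i : s (ppi (2 * i)) = ppi (2 * i + 1).
Proof. rewrite ppi_even, ppi_odd. auto. Qed.

Section Cut.
Variable e : nat.
Hypothesis He : forall x, x < e -> s x < e.

Lemma used_bound i : 2 * i <= e -> forall y, In y (used i) -> y < e.
Proof.
  induction i as [|i IH]; [simpl; tauto|]. intros Hi y Hy.
  rewrite used_S in Hy. pose proof (used_prop i) as [ND [Cl Len]].
  destruct (fill_seq (used i) e ND (IH ltac:(lia)) ltac:(lia)) as [z [Hz1 Hz2]].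
  pose proof (nx_spec i) as [_ Hm]. pose proof (Hm z Hz2).
  apply in_app_or in Hy. destruct Hy as [Hy|[<-|[<-|[]]]]; [apply IH; auto; lia|lia|].
  apply He. lia.
Qed.

Lemma cut_even : e = 2 * Nat.div2 e.
Proof.
  destruct (Nat.Even_or_Odd e) as [[k Ek]|[k Ek]].
  - rewrite Ek, Nat.div2_double. auto.
  - exfalso.
    pose proof (used_prop k) as [ND [Cl Len]].
    pose proof (used_bound k ltac:(lia)) as B.
    destruct (fill_seq (used k) e ND B ltac:(lia)) as [z [Hz1 Hz2]].
    pose proof (nx_spec k) as [_ Hm]. pose proof (Hm z Hz2).
    assert (B2 : forall y, In y (used (S k)) -> y < e).
    { intros y Hy. rewrite used_S in Hy. apply in_app_or in Hy.
      destruct Hy as [Hy|[<-|[<-|[]]]]; [apply B; auto|lia|apply He; lia]. }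
    pose proof (used_prop (S k)) as [ND2 [_ Len2]].
    assert (incl (used (S k)) (seq 0 e)) by (intros y Hy; apply in_seq; apply B2 in Hy; lia).
    pose proof (NoDup_incl_length ND2 H0). rewrite Len2, length_seq in H1. lia.
Qed.

Lemma ppi_pres x : x < e -> ppi x < e.
Proof.
  intro Hx. apply (used_bound (Nat.div2 e)); [rewrite <- cut_even; auto|].
  rewrite used_map, <- cut_even. apply in_map, in_seq. lia.
Qed.

Lemma ppi_onto y : y < e -> exists x, x < e /\ ppi x = y.
Proof.
  intro Hy. pose proof (used_prop (Nat.div2 e)) as [ND [_ Len]]. rewrite <- cut_even in Len.
  assert (incl (used (Nat.div2 e)) (seq 0 e)).
  { intros z Hz. apply in_seq. apply (used_bound (Nat.div2 e)) in Hz; [lia|rewrite <- cut_even; auto]. }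
  assert (Len' : length (seq 0 e) <= length (used (Nat.div2 e))) by (rewrite length_seq; lia).
  pose proof (NoDup_length_incl ND Len' H) as I2.
  assert (In y (seq 0 e)) by (apply in_seq; lia). apply I2 in H0.
  rewrite used_map, <- cut_even in H0. apply in_map_iff in H0. destruct H0 as [x [E Hx]].
  apply in_seq in Hx. exists x; split; [lia|auto].
Qed.
End Cut.

Lemma ppi_LF : LF ppi.
Proof.
  intro n. destruct (HLF n) as [m [H1 H2]]. exists m; split; auto. intros; apply ppi_pres; auto.
Qed.

Lemma ppi_perm : perm ppi.
Proof.
  apply inj_surj_perm.
  - intros x y E. pose proof (used_prop (S (x + y))) as [ND _]. rewrite used_map in ND.
    apply (NoDup_map_inj ppi _ x y ND); auto; apply in_seq; lia.
  - intro y. destruct (HLF (S y)) as [m [H1 H2]]. destruct (ppi_onto m H2 y) as [x [_ E]]; [lia|eauto].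
Qed.
End Pairing.

Lemma pairing s : (forall x, s (s x) = x) -> (forall x, s x <> x) -> LF s ->
  exists p, perm p /\ LF p /\ forall i, s (p (2 * i)) = p (2 * i + 1).
Proof.
  intros H1 H2 H3. exists (ppi s). split; [apply ppi_perm|split; [apply ppi_LF|apply ppi_pair]]; auto.
Qed.

Definition xi0 (n : nat) : nat := if Nat.even n then S n else Nat.pred n.

Lemma xi0_even i : xi0 (2 * i) = 2 * i + 1.
Proof. unfold xi0. rewrite Nat.even_mul. simpl. lia. Qed.
Lemma xi0_odd i : xi0 (2 * i + 1) = 2 * i.
Proof. unfold xi0. rewrite Nat.even_add, Nat.even_mul. simpl. lia. Qed.
Lemma xi0_cases x : (exists i, x = 2 * i /\ xi0 x = 2 * i + 1) \/ (exists i, x = 2 * i + 1 /\ xi0 x = 2 * i).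
Proof.
  destruct (Nat.Even_or_Odd x) as [[i ->]|[i ->]]; [left|right]; exists i; split; auto.
  - apply xi0_even. - apply xi0_odd.
Qed.
Lemma xi0_invol x : xi0 (xi0 x) = x.
Proof. destruct (xi0_cases x) as [[i [-> E]]|[i [-> E]]]; rewrite E; [apply xi0_odd|apply xi0_even]. Qed.

Lemma lift_comp a (Ha : forall m n, a m = a n -> m = n) s t y :
  lift a (fun x => s (t x)) y = lift a s (lift a t y).
Proof.
  destruct (decP (inA a y)) as [[n <-]|N].
  - rewrite !lift_a; auto.
  - rewrite (lift_out a t y N), !lift_out; auto.
Qed.

Section Main.
Variable K : (nat -> nat) -> Prop.
Hypothesis HK : is_subgroup K.
Variable a : nat -> nat.
Hypothesis Ha : forall m n, a m = a n -> m = n.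
Hypothesis Mono : forall j, (forall i, j i < j (S i)) -> exists h, K h /\ forall i, h (a i) = a (j i).
Hypothesis HR : K (lift a rho).
Hypothesis HX : K (lift a xi0).

Lemma transport m mu s : K m -> (forall i, m (a i) = a (mu i)) ->
  (forall i, s (mu (2 * i)) = mu (2 * i + 1)) -> (forall i, s (mu (2 * i + 1)) = mu (2 * i)) ->
  (forall y, (forall i, mu i <> y) -> s y = y) -> K (lift a s).
Proof.
  intros Hm Hmu S1 S2 S3.
  destruct (K_inv K HK m Hm) as [mi [Hmi [Hmi1 Hmi2]]].
  apply (K_ext K) with (f := fun y => m (lift a xi0 (mi y))).
  - apply (K_comp K HK (fun y => lift a xi0 (mi y)) m); auto. apply K_comp; auto.
  - intro y.
    assert (Emi : forall i, mi (a (mu i)) = a i) by (intro i; rewrite <- Hmu; auto).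
    destruct (decP (exists i, a (mu i) = y)) as [[t <-]|N].
    + rewrite Emi, lift_a, lift_a, Hmu; auto. f_equal.
      destruct (xi0_cases t) as [[i [-> E]]|[i [-> E]]]; rewrite E; [rewrite S1|rewrite S2]; auto.
    + assert (Nmi : ~ inA a (mi y)).
      { intros [t Et]. apply N. exists t. rewrite <- Hmu, Et. auto. }
      rewrite (lift_out a xi0 _ Nmi), Hmi2.
      destruct (decP (inA a y)) as [[n <-]|Ny].
      * rewrite lift_a, S3; auto. intros i E. apply N. exists i. rewrite E. auto.
      * rewrite lift_out; auto.
Qed.

Lemma realize k p : (forall i, k i < k (S i)) -> perm p -> LF p ->
  exists m, K m /\ forall i, m (a i) = a (k (p i)).
Proof.
  intros Hk Hp HL.
  destruct (rho_universal p Hp HL) as [j [Hj Hrj]].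
  destruct (Mono k Hk) as [hk [Khk Ehk]].
  destruct (Mono j Hj) as [hj [Khj Ehj]].
  destruct (K_inv K HK hj Khj) as [hi [Khi [Ehi1 Ehi2]]].
  exists (fun y => hk (hi (lift a rho (hj y)))). split.
  - apply (K_comp K HK (fun y => hi (lift a rho (hj y))) hk); auto.
    apply (K_comp K HK (fun y => lift a rho (hj y)) hi); auto.
    apply (K_comp K HK hj (lift a rho)); auto.
  - intro i. rewrite Ehj, lift_a, Hrj, <- Ehj, Ehi1, Ehk; auto.
Qed.

Section Enum.
Variable P : nat -> Prop.
Hypothesis Pinf : forall N, exists x, N <= x /\ P x.

Fixpoint ke (i : nat) : nat :=
  match i with
  | 0 => minnat P
  | S i' => minnat (fun x => P x /\ ke i' < x)
  end.

Lemma ke_spec i : P (ke i) /\ ke i < ke (S i) /\ forall x, P x -> ke i < x -> ke (S i) <= x.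
Proof.
  assert (H : exists x, P x /\ ke i < x) by (destruct (Pinf (S (ke i))) as [x [H1 H2]]; exists x; split; auto; lia).
  pose proof (minnat_spec _ H) as [[H1 H2] H3].
  assert (P (ke i)).
  { destruct i; simpl.
    - apply minnat_P. destruct (Pinf 0) as [x [_ Hx]]; eauto.
    - assert (H' : exists x, P x /\ ke i < x) by (destruct (Pinf (S (ke i))) as [x [H4 H5]]; exists x; split; auto; lia).
      apply (minnat_P _ H'). }
  simpl. split; [auto|split; [auto|]]. intros x Hx Hlt. apply H3; auto.
Qed.

Lemma ke_P i : P (ke i).
Proof. apply ke_spec. Qed.
Lemma ke_lt i : ke i < ke (S i).
Proof. apply ke_spec. Qed.
Lemma ke_mono i i' : i <= i' -> ke i <= ke i'.
Proof. induction 1; auto. pose proof (ke_lt m). lia. Qed.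
Lemma ke_smono i i' : i < i' -> ke i < ke i'.
Proof. intro H. pose proof (ke_lt i). pose proof (ke_mono (S i) i' H). lia. Qed.
Lemma ke_ge i : i <= ke i.
Proof. induction i; [lia|]. pose proof (ke_lt i). lia. Qed.
Lemma ke_inj i i' : ke i = ke i' -> i = i'.
Proof.
  intro E. destruct (Nat.lt_trichotomy i i') as [H|[H|H]]; auto;
  apply ke_smono in H; lia.
Qed.
Lemma ke_onto y : P y -> exists i, ke i = y.
Proof.
  intro Py. destruct (decP (exists i, ke i = y)) as [H|H]; auto. exfalso.
  assert (forall i, ke i < y).
  { induction i.
    - assert (ke 0 <= y) by (simpl; apply minnat_le; auto).
      destruct (Nat.eq_dec (ke 0) y); [exfalso; apply H; eauto|lia].
    - pose proof (ke_spec i) as [_ [_ H3]]. pose proof (H3 y Py IHi).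
      destruct (Nat.eq_dec (ke (S i)) y); [exfalso; apply H; eauto|lia]. }
  pose proof (H0 y). pose proof (ke_ge y). lia.
Qed.
End Enum.

Lemma LF_inf s : (forall x, s (s x) = x) -> LF s -> (forall N, exists x, N <= x /\ s x <> x) ->
  K (lift a s).
Proof.
  intros Hs HL Hinf.
  set (P := fun x => s x <> x).
  set (k := ke P).
  assert (kP : forall i, P (k i)) by (intro; apply ke_P; auto).
  assert (PS : forall y, P y -> P (s y)) by (unfold P; intros y H E; rewrite Hs in E; apply H; auto).
  set (kinv := fun y => minnat (fun i => k i = y)).
  assert (Ekinv : forall y, P y -> k (kinv y) = y).
  { intros y Hy. apply (minnat_P (fun i => k i = y)). apply ke_onto; auto. }
  set (t := fun i => kinv (s (k i))).
  assert (Et : forall i, k (t i) = s (k i)) by (intro i; apply Ekinv, PS, kP).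
  assert (Ht : forall i, t (t i) = i).
  { intro i. apply (ke_inj P Hinf). change (k (t (t i)) = k i). rewrite !Et, Hs. auto. }
  assert (Hfp : forall i, t i <> i).
  { intros i E. apply (kP i). rewrite <- Et, E. auto. }
  assert (HLt : LF t).
  { intro n. destruct (HL (S (k n))) as [m [Hm1 Hm2]].
    assert (Ex : exists i, m <= k i) by (exists m; apply (ke_ge P Hinf)).
    pose proof (minnat_spec _ Ex) as [Hm3 Hm4]. set (e := minnat (fun i => m <= k i)) in *.
    exists e. split.
    - destruct (Nat.le_gt_cases n e) as [H|H]; auto.
      pose proof (ke_mono P Hinf e n ltac:(lia)). fold k in H0. lia.
    - intros i Hi. assert (k i < m).
      { destruct (Nat.lt_ge_cases (k i) m) as [H|H]; auto. apply Hm4 in H. lia. }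
      apply Hm2 in H. rewrite <- Et in H.
      destruct (Nat.lt_ge_cases (t i) e) as [H'|H']; auto.
      pose proof (ke_mono P Hinf e (t i) H'). fold k in H0. lia. }
  destruct (pairing t Ht Hfp HLt) as [p [Hp [HLp Hpp]]].
  assert (kinc : forall i, k i < k (S i)) by (intro; apply ke_lt; auto).
  destruct (realize k p kinc Hp HLp) as [m [Km Em]].
  apply (transport m (fun i => k (p i)) s Km Em).
  - intro i. rewrite <- Et, Hpp. auto.
  - intro i. rewrite <- Hpp, Et, Hs. auto.
  - intros y N. destruct (decP (s y = y)) as [E|E]; auto. exfalso.
    destruct (ke_onto P Hinf y E) as [i Ei].
    destruct Hp as [q [_ Hq]]. apply (N (q i)). rewrite Hq. auto.
Qed.

Lemma LF_any s : (forall x, s (s x) = x) -> LF s -> K (lift a s).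
Proof.
  intros Hs HL.
  destruct (decP (forall N, exists x, N <= x /\ s x <> x)) as [Hinf|Hfin]; [apply LF_inf; auto|].
  assert (HN : exists N, forall x, N <= x -> s x = x).
  { destruct (decP (exists N, forall x, N <= x -> s x = x)) as [H|H]; auto. exfalso. apply Hfin.
    intro N. destruct (decP (exists x, N <= x /\ s x <> x)) as [H'|H']; auto. exfalso. apply H.
    exists N. intros x Hx. destruct (decP (s x = x)) as [|E]; auto. exfalso; apply H'; eauto. }
  destruct HN as [N HN].
  assert (Hlow : forall x, x < 2 * N -> s x < 2 * N).
  { intros x Hx. destruct (Nat.lt_ge_cases (s x) (2 * N)) as [H|H]; auto.
    pose proof (HN (s x) ltac:(lia)). rewrite Hs in H0. lia. }
  assert (Hxi : forall x, 2 * N <= x -> 2 * N <= xi0 x).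
  { intros x Hx. destruct (xi0_cases x) as [[i [-> E]]|[i [-> E]]]; rewrite E; lia. }
  assert (Hxim : forall x m, x < 2 * m -> xi0 x < 2 * m).
  { intros x m Hx. destruct (xi0_cases x) as [[i [-> E]]|[i [-> E]]]; rewrite E; lia. }
  set (lam := fun x => if Nat.leb (2 * N) x then xi0 x else x).
  set (s' := fun x => if Nat.leb (2 * N) x then xi0 x else s x).
  assert (Hlam : forall x, lam (lam x) = x).
  { intro x. unfold lam. destruct (Nat.leb_spec (2 * N) x).
    - destruct (Nat.leb_spec (2 * N) (xi0 x)); [apply xi0_invol|pose proof (Hxi x H); lia].
    - destruct (Nat.leb_spec (2 * N) x); [lia|auto]. }
  assert (Hs' : forall x, s' (s' x) = x).
  { intro x. unfold s'. destruct (Nat.leb_spec (2 * N) x).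
    - destruct (Nat.leb_spec (2 * N) (xi0 x)); [apply xi0_invol|pose proof (Hxi x H); lia].
    - pose proof (Hlow x H). destruct (Nat.leb_spec (2 * N) (s x)); [lia|auto]. }
  assert (Hinf2 : forall (f : nat -> nat), (forall x, 2 * N <= x -> f x = xi0 x) ->
                   forall M, exists x, M <= x /\ f x <> x).
  { intros f Hf M. exists (2 * (M + N)). split; [lia|]. rewrite Hf by lia. rewrite xi0_even. lia. }
  assert (HLF2 : forall (f : nat -> nat), (forall x, 2 * N <= x -> f x = xi0 x) ->
                   (forall x, x < 2 * N -> f x < 2 * N) -> LF f).
  { intros f Hf Hl n. exists (2 * (n + N)). split; [lia|]. intros x Hx.
    destruct (Nat.lt_ge_cases x (2 * N)) as [H|H]; [pose proof (Hl x H); lia|].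
    rewrite Hf by auto. apply Hxim. auto. }
  apply (K_ext K) with (f := fun y => lift a s' (lift a lam y)).
  - apply (K_comp K HK (lift a lam) (lift a s')).
    + apply LF_inf; auto.
      * apply HLF2; unfold lam; intros x Hx; destruct (Nat.leb_spec (2 * N) x); auto; lia.
      * apply Hinf2. unfold lam; intros x Hx; destruct (Nat.leb_spec (2 * N) x); auto; lia.
    + apply LF_inf; auto.
      * apply HLF2; unfold s'; intros x Hx; destruct (Nat.leb_spec (2 * N) x); auto; try lia; apply Hlow; auto.
      * apply Hinf2. unfold s'; intros x Hx; destruct (Nat.leb_spec (2 * N) x); auto; lia.
  - intro y. rewrite <- lift_comp; auto. f_equal. apply functional_extensionality. intro x.
    unfold s', lam. destruct (Nat.leb_spec (2 * N) x).
    + destruct (Nat.leb_spec (2 * N) (xi0 x)); [|pose proof (Hxi x H); lia].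
      rewrite xi0_invol. symmetry; apply HN. lia.
    + destruct (Nat.leb_spec (2 * N) x); [lia|auto].
Qed.

Lemma index_invols s : (forall x, s (s x) = x) -> K (lift a s).
Proof.
  intro Hs.
  set (mx := fun n => fold_right max 0 (map s (seq 0 n))).
  assert (Hmx : forall n x, x < n -> s x <= mx n).
  { intros n x Hx. unfold mx. assert (In (s x) (map s (seq 0 n))) by (apply in_map, in_seq; lia).
    revert H. generalize (map s (seq 0 n)). induction l as [|z l IH]; simpl; [tauto|].
    intros [<-|H]; [lia|]. apply IH in H. lia. }
  set (nc := fix nc q := match q with 0 => 0 | S q' => S (max (nc q') (mx (nc q'))) end).
  assert (nc_S : forall q, nc (S q) = S (max (nc q) (mx (nc q)))) by reflexivity.
  assert (nc_lt : forall q, nc q < nc (S q)) by (intro q; rewrite nc_S; lia).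
  assert (nc_mono : forall q q', q <= q' -> nc q <= nc q') by (induction 1; auto; pose proof (nc_lt m); lia).
  assert (nc_ge : forall q, q <= nc q) by (induction q; [simpl; lia|pose proof (nc_lt q); lia]).
  assert (nc_s : forall q x, x < nc q -> s x < nc (S q)) by (intros q x Hx; rewrite nc_S; pose proof (Hmx _ _ Hx); lia).
  set (bl := fun x => minnat (fun q => x < nc (S q))).
  assert (bl_spec : forall x, nc (bl x) <= x < nc (S (bl x))).
  { intro x. assert (Ex : exists q, x < nc (S q)) by (exists x; pose proof (nc_ge (S x)); lia).
    pose proof (minnat_spec _ Ex) as [H1 H2]. fold (bl x) in H1, H2. split; auto.
    destruct (bl x) as [|q] eqn:E; [simpl; lia|].
    destruct (Nat.lt_ge_cases x (nc (S q))) as [H|H]; auto. apply H2 in H. lia. }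
  assert (key : forall x q, x < nc q -> ((Nat.even (bl (min x (s x))) = true /\ Nat.even q = true) \/
                                         (Nat.even (bl (min x (s x))) = false /\ Nat.even q = false)) ->
                 s x < nc q).
  { intros x q Hx Hpar. set (y := min x (s x)). set (p := bl y).
    assert (Hy : y < nc (S p)) by apply bl_spec.
    assert (Hsy : s y < nc (S (S p))) by (apply nc_s; auto).
    assert (Hm : s x <= max x (s x)) by lia.
    assert (max x (s x) = s y) by (unfold y; destruct (Nat.le_ge_cases x (s x)); [rewrite Nat.min_l, Nat.max_r|rewrite Nat.min_r, Nat.max_l, Hs]; auto).
    assert (y < nc q) by (unfold y; lia).
    assert (p < q).
    { destruct (Nat.lt_ge_cases p q) as [H'|H']; auto. pose proof (nc_mono q p H'). pose proof (bl_spec y). fold p in H2. lia. }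
    assert (S (S p) <= q).
    { destruct (Nat.eq_dec (S p) q) as [E|E]; [|lia]. exfalso. subst q.
      rewrite Nat.even_succ, <- Nat.negb_even in Hpar. fold y p in Hpar. destruct (Nat.even p); simpl in Hpar; intuition congruence. }
    pose proof (nc_mono _ _ H2). lia. }
  set (s0 := fun x => if Nat.even (bl (min x (s x))) then s x else x).
  set (s1 := fun x => if Nat.even (bl (min x (s x))) then x else s x).
  assert (Emin : forall x, min (s x) (s (s x)) = min x (s x)) by (intro x; rewrite Hs; apply Nat.min_comm).
  assert (Hs0 : forall x, s0 (s0 x) = x).
  { intro x. unfold s0. destruct (Nat.even (bl (min x (s x)))) eqn:E.
    - rewrite Emin, E. auto.
    - rewrite E. auto. }
  assert (Hs1 : forall x, s1 (s1 x) = x).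
  { intro x. unfold s1. destruct (Nat.even (bl (min x (s x)))) eqn:E.
    - rewrite E. auto.
    - rewrite Emin, E. auto. }
  apply (K_ext K) with (f := fun y => lift a s0 (lift a s1 y)).
  - apply (K_comp K HK (lift a s1) (lift a s0)).
    + apply LF_any; auto. intro n. exists (nc (2 * n + 1)). split; [pose proof (nc_ge (2*n+1)); lia|].
      intros x Hx. unfold s1. destruct (Nat.even (bl (min x (s x)))) eqn:E; auto.
      apply key; auto. right. split; auto. rewrite Nat.even_add, Nat.even_mul. auto.
    + apply LF_any; auto. intro n. exists (nc (2 * n)). split; [pose proof (nc_ge (2*n)); lia|].
      intros x Hx. unfold s0. destruct (Nat.even (bl (min x (s x)))) eqn:E; auto.
      apply key; auto. left. split; auto. rewrite Nat.even_mul. auto.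
  - intro y. rewrite <- lift_comp; auto. f_equal. apply functional_extensionality. intro x.
    unfold s0, s1. destruct (Nat.even (bl (min x (s x)))) eqn:E.
    + rewrite E. auto.
    + rewrite Emin, E. auto.
Qed.
End Main.

Fixpoint rpre (c : nat -> nat) (n : nat) : list nat :=
  match n with 0 => [] | S n' => c n' :: rpre c n' end.

Fixpoint psiR (r : list nat) : list nat :=
  match r with
  | [] => []
  | y :: r' => match r' with
               | [] => repeat 0 (Nat.div2 y) ++ [1]
               | _ :: _ => repeat 0 y ++ 1 :: psiR r'
               end
  end.

Definition domR (r : list nat) : Prop := r <> [] /\ Nat.even (last r 0) = true.

Lemma rep01 a b u v : repeat 0 a ++ 1 :: u = repeat 0 b ++ 1 :: v -> a = b /\ u = v.
Proof.
  revert b. induction a as [|a IH]; intros b E; destruct b as [|b]; cbn [repeat app] in E.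
  - injection E as E. auto.
  - discriminate E.
  - discriminate E.
  - injection E as E. apply IH in E. intuition.
Qed.

Lemma last_app' (l1 l2 : list nat) d : l2 <> [] -> last (l1 ++ l2) d = last l2 d.
Proof.
  intro H. induction l1 as [|x l1 IH]; auto. simpl. rewrite IH.
  destruct (l1 ++ l2) eqn:E; auto. apply app_eq_nil in E. tauto.
Qed.

Lemma last_cons1 (l : list nat) : last (1 :: l) 0 = 1 \/ (l <> [] /\ last (1 :: l) 0 = last l 0).
Proof. destruct l; [left|right]; auto. split; [discriminate|auto]. Qed.

Lemma psiR_ne r : r <> [] -> psiR r <> [] /\ last (psiR r) 0 = 1.
Proof.
  induction r as [|y r' IH]; [tauto|]. intros _. destruct r' as [|z r''].
  - change (psiR [y]) with (repeat 0 (Nat.div2 y) ++ [1]).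
    split; [destruct (Nat.div2 y); discriminate|]. rewrite last_last. auto.
  - change (psiR (y :: z :: r'')) with (repeat 0 y ++ 1 :: psiR (z :: r'')).
    destruct (IH ltac:(discriminate)) as [H1 H2]. split; [destruct y; discriminate|].
    rewrite last_app' by discriminate.
    destruct (psiR (z :: r'')) eqn:E; [contradiction|]. rewrite <- H2. auto.
Qed.

Lemma even_div2 y : Nat.even y = true -> y = 2 * Nat.div2 y.
Proof. intro He. pose proof (Nat.div2_odd y) as H. unfold Nat.odd in H. rewrite He in H. simpl in H. lia. Qed.

Lemma psiR_inj r r' : domR r -> domR r' -> psiR r = psiR r' -> r = r'.
Proof.
  revert r'. induction r as [|y r1 IH]; intros r' [Hn He] Hd' E; [contradiction|].
  destruct r' as [|y' r1']; [destruct Hd'; contradiction|].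
  destruct Hd' as [_ He'].
  destruct r1 as [|z r2]; destruct r1' as [|z' r2'].
  - simpl in *. apply app_inj_tail in E. destruct E as [E _].
    apply (f_equal (@length nat)) in E. rewrite !repeat_length in E.
    rewrite (even_div2 y He), (even_div2 y' He'), E. auto.
  - exfalso. cbn [psiR] in E. pose proof (psiR_ne (z' :: r2') ltac:(discriminate)) as [N _].
    apply rep01 in E. destruct E as [_ E]. apply N. auto.
  - exfalso. cbn [psiR] in E. pose proof (psiR_ne (z :: r2) ltac:(discriminate)) as [N _].
    symmetry in E. apply rep01 in E. destruct E as [_ E]. apply N. auto.
  - cbn [psiR] in E. apply rep01 in E. destruct E as [E1 E2]. subst y'. f_equal.
    apply IH; auto.
    + split; [discriminate|]. simpl in He. auto.
    + split; [discriminate|]. simpl in He'. auto.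
Qed.

Lemma psiR_not_dom r : r <> [] -> ~ domR (psiR r).
Proof. intros H [_ E]. pose proof (psiR_ne r H) as [_ E2]. rewrite E2 in E. discriminate. Qed.

Lemma rpre_zeros d p q : (forall t, t < q -> d (p + t) = 0) -> rpre d (p + q) = repeat 0 q ++ rpre d p.
Proof.
  induction q as [|q IH]; intros H; [rewrite Nat.add_0_r; auto|].
  replace (p + S q) with (S (p + q)) by lia. simpl. rewrite H by lia. rewrite IH; auto.
Qed.

Lemma rpre_len c n : length (rpre c n) = n.
Proof. induction n; simpl; auto. Qed.

Lemma rpre_last c n : last (rpre c (S n)) 0 = c 0.
Proof. induction n as [|n IH]; [reflexivity|]. change (last (c (S n) :: rpre c (S n)) 0 = c 0). rewrite <- IH. simpl rpre. reflexivity. Qed.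

Section Codes.
Variable j : nat -> nat.
Hypothesis Hj : forall i, j i < j (S i).

Lemma j_mono i i' : i <= i' -> j i <= j i'.
Proof. induction 1; auto. pose proof (Hj m). lia. Qed.

Definition cj (i : nat) : nat := match i with 0 => 2 * j 0 | S i' => j (S i') - j i' - 1 end.
Definition dj (n : nat) : nat := match n with 0 => 1 | S n' => if decP (exists k, j k = n') then 1 else 0 end.

Lemma codes_psi i : psiR (rpre cj (S i)) = rpre dj (S (j i)).
Proof.
  induction i as [|i IH].
  - change (repeat 0 (Nat.div2 (2 * j 0)) ++ [1] = rpre dj (S (j 0))). rewrite Nat.div2_double.
    replace (S (j 0)) with (1 + j 0) by lia. rewrite rpre_zeros; auto.
    intros t Ht. change (dj (S t) = 0). unfold dj. destruct (decP (exists k, j k = t)) as [[k Ek]|]; auto.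
    pose proof (j_mono 0 k ltac:(lia)). lia.
  - change (rpre cj (S (S i))) with (cj (S i) :: rpre cj (S i)).
    change (psiR (cj (S i) :: rpre cj (S i))) with (repeat 0 (cj (S i)) ++ 1 :: psiR (rpre cj (S i))).
    rewrite IH. simpl cj.
    replace (S (j (S i))) with ((S (S (j i))) + (j (S i) - j i - 1)) by (pose proof (Hj i); lia).
    rewrite rpre_zeros.
    + f_equal. simpl. destruct (decP (exists k, j k = j i)) as [_|N]; [auto|exfalso; apply N; eauto].
    + intros t Ht. simpl. destruct (decP (exists k, j k = S (j i + t))) as [[k Ek]|]; auto.
      exfalso. destruct (Nat.le_gt_cases k i) as [H|H].
      * pose proof (j_mono k i H). lia.
      * pose proof (j_mono (S i) k H). lia.
Qed.

Lemma cj_dom i : domR (rpre cj (S i)).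
Proof. split; [discriminate|]. rewrite rpre_last. change (Nat.even (2 * j 0) = true). rewrite Nat.even_mul. reflexivity. Qed.
End Codes.

Section Tree.
Variable Omega : Type.
Variable b0 : Omega.
Variable D : nat -> list Omega -> Prop.
Hypothesis HDlen : forall i s, D i s -> length s = i.
Hypothesis HDne : forall i, exists s, D i s.
Hypothesis HD2 : forall i s, D i s -> forall l : list Omega, exists b, ~ In b l /\ D (S i) (s ++ [b]).

Fixpoint pathTb (r : list nat) (tb : list Omega) : list Omega :=
  match r with [] => [] | x :: r' => pathTb r' tb ++ [nth (codeL (x :: r')) tb b0] end.

Definition newlab (n : nat) (tb : list Omega) : Omega :=
  let r := decL n in
  epsilon (inhabits b0) (fun b => ~ In b tb /\ D (length r) (pathTb (tl r) tb ++ [b])).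

Fixpoint table (n : nat) : list Omega :=
  match n with 0 => [] | S n' => table n' ++ [newlab n' (table n')] end.

Lemma table_len n : length (table n) = n.
Proof. induction n; simpl; auto. rewrite length_app, IHn. simpl. lia. Qed.

Lemma table_prefix n m k : n <= m -> k < n -> nth k (table m) b0 = nth k (table n) b0.
Proof.
  induction 1; auto. intro Hk. simpl. rewrite app_nth1 by (rewrite table_len; lia). auto.
Qed.

Definition Lab (r : list nat) : Omega := nth (codeL r) (table (S (codeL r))) b0.

Lemma Lab_table r n : codeL r < n -> nth (codeL r) (table n) b0 = Lab r.
Proof. intro H. unfold Lab. apply table_prefix; lia. Qed.

Lemma Lab_def r : Lab r = newlab (codeL r) (table (codeL r)).
Proof. unfold Lab. simpl. rewrite app_nth2 by (rewrite table_len; lia). rewrite table_len, Nat.sub_diag. auto. Qed.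

Fixpoint pathR (r : list nat) : list Omega :=
  match r with [] => [] | x :: r' => pathR r' ++ [Lab (x :: r')] end.

Lemma pathTb_eq r n : codeL r < n -> pathTb r (table n) = pathR r.
Proof.
  induction r as [|x r IH]; auto. intro H. cbn [pathTb pathR]. rewrite Lab_table by auto.
  rewrite IH; auto. pose proof (codeL_tl x r). lia.
Qed.

Lemma Lab_spec r : r <> [] -> D (length (tl r)) (pathR (tl r)) ->
  ~ In (Lab r) (table (codeL r)) /\ D (length r) (pathR r).
Proof.
  destruct r as [|x r']; [tauto|]. intros _ Hp. simpl tl in Hp.
  assert (E : pathTb r' (table (codeL (x :: r'))) = pathR r') by (apply pathTb_eq, codeL_tl).
  pose proof (HD2 _ _ Hp (table (codeL (x :: r')))) as Ex.
  rewrite <- E in Ex.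
  assert (Ex' : exists b, ~ In b (table (codeL (x :: r'))) /\
                 D (length (decL (codeL (x :: r')))) (pathTb (tl (decL (codeL (x :: r')))) (table (codeL (x :: r'))) ++ [b])).
  { rewrite decL_code. simpl. auto. }
  pose proof (epsilon_spec (inhabits b0) _ Ex') as [S1 S2].
  fold (newlab (codeL (x :: r')) (table (codeL (x :: r')))) in S1, S2.
  rewrite <- Lab_def in S1, S2. rewrite decL_code in S2. cbn [tl length] in S2. rewrite E in S2.
  split; auto.
Qed.

Lemma pathR_D r : D (length r) (pathR r).
Proof.
  induction r as [|x r IH].
  - simpl. destruct (HDne 0) as [s Hs]. pose proof (HDlen _ _ Hs). destruct s; [auto|discriminate].
  - apply Lab_spec; [discriminate|auto].
Qed.

Lemma Lab_fresh r : r <> [] -> ~ In (Lab r) (table (codeL r)).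
Proof. intro H. apply Lab_spec; auto. apply pathR_D. Qed.

Lemma Lab_inj r r' : r <> [] -> r' <> [] -> Lab r = Lab r' -> r = r'.
Proof.
  intros H H' E. destruct (Nat.lt_trichotomy (codeL r) (codeL r')) as [L|[L|L]].
  - exfalso. apply (Lab_fresh r' H'). rewrite <- E, <- (Lab_table r (codeL r')) by auto.
    apply nth_In. rewrite table_len. auto.
  - apply codeL_inj; auto.
  - exfalso. apply (Lab_fresh r H). rewrite E, <- (Lab_table r' (codeL r)) by auto.
    apply nth_In. rewrite table_len. auto.
Qed.

Lemma prefix_path c i : prefix (fun n => Lab (rpre c (S n))) i = pathR (rpre c i).
Proof.
  unfold prefix. induction i as [|i IH]; auto.
  rewrite seq_S, map_app, IH. simpl. auto.
Qed.

Definition W (y : Omega) : Omega :=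
  match decP (exists r, domR r /\ Lab r = y) with
  | left H => Lab (psiR (proj1_sig (@ClassicalEpsilon.constructive_indefinite_description _ _ H)))
  | right _ =>
    match decP (exists r, domR r /\ Lab (psiR r) = y) with
    | left H => Lab (proj1_sig (@ClassicalEpsilon.constructive_indefinite_description _ _ H))
    | right _ => y
    end
  end.

Lemma W_dom r : domR r -> W (Lab r) = Lab (psiR r).
Proof.
  intro Hr. unfold W. destruct (decP (exists r0, domR r0 /\ Lab r0 = Lab r)) as [H|N].
  - destruct (ClassicalEpsilon.constructive_indefinite_description _ H) as [r0 [H1 H2]]. simpl.
    apply Lab_inj in H2; [subst; auto|apply H1|apply Hr].
  - exfalso; apply N; eauto.
Qed.

Lemma W_img r : domR r -> W (Lab (psiR r)) = Lab r.
Proof.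
  intro Hr. pose proof (psiR_ne r (proj1 Hr)) as [Hn _].
  unfold W. destruct (decP (exists r0, domR r0 /\ Lab r0 = Lab (psiR r))) as [[r0 [H1 H2]]|_].
  - exfalso. apply Lab_inj in H2; [|apply H1|auto]. subst. apply (psiR_not_dom r (proj1 Hr)); auto.
  - destruct (decP (exists r0, domR r0 /\ Lab (psiR r0) = Lab (psiR r))) as [H|N].
    + destruct (ClassicalEpsilon.constructive_indefinite_description _ H) as [r0 [H1 H2]]. simpl.
      apply Lab_inj in H2; [|apply psiR_ne, H1|auto]. apply psiR_inj in H2; auto. subst; auto.
    + exfalso; apply N; eauto.
Qed.

Lemma W_invol y : W (W y) = y.
Proof.
  destruct (decP (exists r, domR r /\ Lab r = y)) as [[r [H1 <-]]|N1].
  - rewrite W_dom, W_img; auto.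
  - destruct (decP (exists r, domR r /\ Lab (psiR r) = y)) as [[r [H1 <-]]|N2].
    + rewrite W_img, W_dom; auto.
    + assert (E : W y = y).
      { unfold W. destruct (decP (exists r, domR r /\ Lab r = y)); [contradiction|].
        destruct (decP (exists r, domR r /\ Lab (psiR r) = y)); [contradiction|auto]. }
      rewrite !E. auto.
Qed.
End Tree.

Theorem core (K : (nat -> nat) -> Prop) (HK : is_subgroup K) (a : nat -> nat)
  (Ha : forall m n, a m = a n -> m = n)
  (Mono : forall j, (forall i, j i < j (S i)) -> exists h, K h /\ forall i, h (a i) = a (j i))
  (HR : K (lift a rho)) (HX : K (lift a xi0)) (Hz0 : K (zz a 0)) (Hz1 : K (zz a 1)) :
  forall f, perm f -> K f.
Proof.
  apply perm_from_invols; auto.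
  apply (all_invols K HK a Ha Hz0 Hz1).
  apply (index_invols K HK a Ha Mono HR HX).
Qed.

Theorem lemma5p2 (Omega : Type) (HOmega : countably_infinite Omega)
  (G : (Omega -> Omega) -> Prop) (HG : is_subgroup G)
  (alpha : nat -> Omega) (Halpha : forall m n, alpha m = alpha n -> m = n)
  (D : nat -> list Omega -> Prop)
  (HDlen : forall i s, D i s -> length s = i)
  (HDne : forall i, exists s, D i s)
  (HD1 : forall i s b, D (S i) (s ++ [b]) -> D i s)
  (HD2 : forall i s, D i s ->
           forall l : list Omega, exists b, ~ In b l /\ D (S i) (s ++ [b]))
  (HD3 : forall beta : nat -> Omega, (forall i, D i (prefix beta i)) ->
           exists g, G g /\ forall i, beta i = g (alpha i)) :
  approx G (Sym Omega).
Proof.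
  destruct HOmega as [e [He1 He2]].
  set (ei := fun y => proj1_sig (@ClassicalEpsilon.constructive_indefinite_description _ _ (He2 y))).
  assert (Eei : forall y, e (ei y) = y).
  { intro y. unfold ei. destruct (ClassicalEpsilon.constructive_indefinite_description _ (He2 y)). auto. }
  assert (Eie : forall n, ei (e n) = n) by (intro n; apply He1; rewrite Eei; auto).
  set (conv := fun (F : nat -> nat) (y : Omega) => e (F (ei y))).
  set (unconv := fun (f : Omega -> Omega) (n : nat) => ei (f (e n))).
  assert (conv_perm : forall F, perm F -> Sym Omega (conv F)).
  { intros F [Fi [H1 H2]]. exists (conv Fi). unfold conv. split; intro x; rewrite Eie; [rewrite H1|rewrite H2]; auto. }
  set (b0 := alpha 0).
  set (Wo := W Omega b0 D).
  assert (W_sym : Sym Omega Wo) by (exists Wo; split; intro; apply W_invol; auto).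
  set (a := fun n => ei (alpha n)).
  assert (Ha : forall m n, a m = a n -> m = n).
  { intros m n E. apply Halpha. unfold a in E. rewrite <- (Eei (alpha m)), <- (Eei (alpha n)), E. auto. }
  split.
  - exists []. split; [simpl; tauto|]. intros f Hf H HH Hsub. apply Hsub. left.
    destruct HG as [HG1 _]. apply HG1; auto.
  - exists [Wo; conv (lift a rho); conv (lift a xi0); conv (zz a 0); conv (zz a 1)].
    split.
    + intros u Hu. simpl in Hu.
      destruct Hu as [<-|[<-|[<-|[<-|[<-|[]]]]]]; auto; apply conv_perm.
      * apply lift_perm; auto. apply rho_perm.
      * apply lift_perm; auto. apply invol_perm, xi0_invol.
      * apply invol_perm. intro; apply zz_invol; auto.
      * apply invol_perm. intro; apply zz_invol; auto.
    + intros f Hf H HH Hsub.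
      assert (Hin : forall u, In u [Wo; conv (lift a rho); conv (lift a xi0); conv (zz a 0); conv (zz a 1)] -> H u)
        by (intros u Hu; apply Hsub; right; auto).
      assert (HG' : forall g, G g -> H g) by (intros g Hg; apply Hsub; left; auto).
      set (K := fun F => H (conv F)).
      assert (H_ext : forall u v, H u -> (forall x, u x = v x) -> H v).
      { intros u v Hu E. replace v with u; auto. apply functional_extensionality; auto. }
      destruct HH as [HH1 [HH2 [HH3 HH4]]].
      assert (HK : is_subgroup K).
      { split; [|split; [|split]].
        - intros F HF. apply HH1 in HF. destruct HF as [gi [H1 H2]].
          exists (unconv gi). unfold unconv, conv in *. split.
          + intro x. specialize (H1 (e x)). rewrite Eie in H1. rewrite H1, Eie. auto.
          + intro y. apply He1. apply H2.
        - unfold K. apply H_ext with (u := fun x => x); auto. intro x. unfold conv. rewrite Eei. auto.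
        - intros F F' HF HF'. unfold K in *.
          apply H_ext with (u := fun y => conv F' (conv F y)); auto.
          intro y. unfold conv. rewrite Eie. auto.
        - intros F HF. destruct (HH4 _ HF) as [h [Hh [Eh1 Eh2]]].
          exists (unconv h). split; [|split].
          + unfold K. apply H_ext with (u := h); auto. intro y. unfold conv, unconv. rewrite !Eei. auto.
          + intro x. unfold unconv. specialize (Eh1 (e x)). unfold conv in Eh1. rewrite Eie in Eh1.
            rewrite Eh1, Eie. auto.
          + intro y. apply He1. specialize (Eh2 (e y)). unfold conv in Eh2. unfold unconv.
            auto. }
      assert (Mono : forall j, (forall i, j i < j (S i)) -> exists h, K h /\ forall i, h (a i) = a (j i)).
      { intros j Hj.
        destruct (HD3 (fun n => Lab Omega b0 D (rpre (cj j) (S n)))) as [gc [Gc Ec]].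
        { intro i. rewrite prefix_path. pose proof (pathR_D Omega b0 D HDlen HDne HD2 (rpre (cj j) i)) as P.
          rewrite rpre_len in P. exact P. }
        destruct (HD3 (fun n => Lab Omega b0 D (rpre (dj j) (S n)))) as [gd [Gd Ed]].
        { intro i. rewrite prefix_path. pose proof (pathR_D Omega b0 D HDlen HDne HD2 (rpre (dj j) i)) as P.
          rewrite rpre_len in P. exact P. }
        destruct (HH4 gd (HG' _ Gd)) as [gdi [Hgdi [Egdi1 Egdi2]]].
        exists (unconv (fun y => gdi (Wo (gc y)))). split.
        - unfold K. apply H_ext with (u := fun y => gdi (Wo (gc y))).
          + apply HH3; [apply HH3; [apply HG'; auto|apply Hin; simpl; auto]|auto].
          + intro y. unfold conv, unconv. rewrite !Eei. auto.
        - intro i. unfold unconv, a. rewrite Eei, <- Ec. unfold Wo. rewrite W_dom; auto.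
          2: apply cj_dom; auto.
          rewrite codes_psi by auto. rewrite Ed, Egdi1. auto. }
      assert (KF : K (unconv f)).
      { apply (core K HK a Ha Mono); try (apply Hin; simpl; tauto).
        destruct Hf as [fi [H1 H2]]. exists (unconv fi). unfold unconv. split; intro x.
        - rewrite Eei, H1, Eie. auto.
        - rewrite Eei, H2, Eie. auto. }
      apply H_ext with (u := conv (unconv f)); auto.
      intro y. unfold conv, unconv. rewrite !Eei. auto.
Qed.
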